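(* Let $S\subset\mathbb{P}^6$ be the surface defined by $$x_1^2-x_2x_4=x_1x_5-x_3x_4=x_1x_3-x_2x_5=x_1x_6-x_3x_5=x_2x_6-x_3^2=x_4x_6-x_5^2=0,$$ $$x_1^2+x_1x_4+x_5x_7=x_1x_2+x_1^2+x_3x_7=x_1x_3+x_1x_5+x_6x_7=0,$$ let $U\subset S$ be the complement in $S$ of the three lines $x_1=x_2=x_3=x_5=x_6=0$, $x_1=x_3=x_4=x_5=x_6=0$, and $x_3=x_5=x_6=x_1+x_4=x_1+x_2=0$, and let $N_U(B)=\#\{x\in U(\mathbb{Q}):H(x)\leq B\}$. Let $M(B)$ denote the number of $\mathbf{x}\in\mathbb{Z}^7$ such that $$x_1^2-x_2x_4=x_1x_5-x_3x_4=x_1x_3-x_2x_5=x_1x_6-x_3x_5=x_2x_6-x_3^2=x_4x_6-x_5^2=0,$$ $$x_1^2-x_1x_4+x_5x_7=x_1^2-x_1x_2-x_3x_7=x_1x_3-x_1x_5+x_6x_7=0,$$ with $\gcd(x_1,\dots,x_7)=1$, $0<|x_1|\leq B$, $0<x_2,x_3,x_4\leq B$, $0<|x_5|\leq B$, $0<x_6\leq B$ and $|x_7|\leq B$. Then $$N_U(B)=2M(B)+O(B).$$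
   Context: For $x\in\mathbb{P}^{6}(\mathbb{Q})$ written as $x=[\mathbf{x}]$ with $\mathbf{x}\in\mathbb{Z}^7$ primitive, $H(x)=\max_i|x_i|$. The $O$-constant is absolute; $B\geq 1$. *)

(* Defs.v *)
From Stdlib Require Import ZArith Reals List Bool.
Import ListNotations.
Open Scope bool_scope.
Open Scope Z_scope.

Definition zrange (K : Z) : list Z :=
  map (fun i => Z.of_nat i - K) (seq 0 (Z.to_nat (2 * K + 1))).

Definition sumZ (K : Z) (f : Z -> nat) : nat :=
  fold_right (fun z acc => (f z + acc)%nat) 0%nat (zrange K).

Definition count7 (K : Z) (P : Z -> Z -> Z -> Z -> Z -> Z -> Z -> bool) : nat :=
  sumZ K (fun x1 => sumZ K (fun x2 => sumZ K (fun x3 => sumZ K (fun x4 =>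
  sumZ K (fun x5 => sumZ K (fun x6 => sumZ K (fun x7 =>
    if P x1 x2 x3 x4 x5 x6 x7 then 1%nat else 0%nat))))))).

Definition primitive7 (x1 x2 x3 x4 x5 x6 x7 : Z) : bool :=
  Z.gcd x1 (Z.gcd x2 (Z.gcd x3 (Z.gcd x4 (Z.gcd x5 (Z.gcd x6 x7))))) =? 1.

(* The first nonzero entry of the list is positive: this picks one of the two
   primitive representatives +x, -x of a rational point of P^6. *)
Fixpoint first_nonzero_pos (l : list Z) : bool :=
  match l with
  | [] => false
  | z :: l' => if z =? 0 then first_nonzero_pos l' else 0 <? z
  end.

Definition on_S (x1 x2 x3 x4 x5 x6 x7 : Z) : bool :=
  (x1^2 - x2*x4 =? 0) && (x1*x5 - x3*x4 =? 0) && (x1*x3 - x2*x5 =? 0) &&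
  (x1*x6 - x3*x5 =? 0) && (x2*x6 - x3^2 =? 0) && (x4*x6 - x5^2 =? 0) &&
  (x1^2 + x1*x4 + x5*x7 =? 0) && (x1*x2 + x1^2 + x3*x7 =? 0) &&
  (x1*x3 + x1*x5 + x6*x7 =? 0).

Definition on_lines (x1 x2 x3 x4 x5 x6 x7 : Z) : bool :=
  ((x1 =? 0) && (x2 =? 0) && (x3 =? 0) && (x5 =? 0) && (x6 =? 0)) ||
  ((x1 =? 0) && (x3 =? 0) && (x4 =? 0) && (x5 =? 0) && (x6 =? 0)) ||
  ((x3 =? 0) && (x5 =? 0) && (x6 =? 0) && (x1 + x4 =? 0) && (x1 + x2 =? 0)).

Definition floorR (B : R) : Z := Int_part B.

(* N_U(B) = #{x in U(Q) : H(x) <= B}: each rational point is counted once via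
   its primitive integer representative whose first nonzero coordinate is > 0;
   H(x) <= B is max |x_i| <= B, i.e. x in [-floor B, floor B]^7. *)
Definition N_U (B : R) : nat :=
  count7 (floorR B) (fun x1 x2 x3 x4 x5 x6 x7 =>
    primitive7 x1 x2 x3 x4 x5 x6 x7 &&
    first_nonzero_pos [x1; x2; x3; x4; x5; x6; x7] &&
    on_S x1 x2 x3 x4 x5 x6 x7 &&
    negb (on_lines x1 x2 x3 x4 x5 x6 x7)).

Definition eqs_M (x1 x2 x3 x4 x5 x6 x7 : Z) : bool :=
  (x1^2 - x2*x4 =? 0) && (x1*x5 - x3*x4 =? 0) && (x1*x3 - x2*x5 =? 0) &&
  (x1*x6 - x3*x5 =? 0) && (x2*x6 - x3^2 =? 0) && (x4*x6 - x5^2 =? 0) &&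
  (x1^2 - x1*x4 + x5*x7 =? 0) && (x1^2 - x1*x2 - x3*x7 =? 0) &&
  (x1*x3 - x1*x5 + x6*x7 =? 0).

(* M(B): all box conditions |x_i| <= B are enforced by the enumeration range;
   the remaining sign/nonvanishing conditions are listed explicitly. *)
Definition M (B : R) : nat :=
  count7 (floorR B) (fun x1 x2 x3 x4 x5 x6 x7 =>
    eqs_M x1 x2 x3 x4 x5 x6 x7 &&
    primitive7 x1 x2 x3 x4 x5 x6 x7 &&
    negb (x1 =? 0) && (0 <? x2) && (0 <? x3) && (0 <? x4) &&
    negb (x5 =? 0) && (0 <? x6)).

(* Main.v *)
Require Import Defs.
From Stdlib Require Import ZArith Reals List.
From Stdlib Require Import Lia Lra Btauto Permutation Bool Znumtheory.
Import ListNotations.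
Open Scope Z_scope.

Definition lsum {A} (l : list A) (f : A -> nat) : nat :=
  fold_right (fun z acc => (f z + acc)%nat) 0%nat l.

Lemma sumZ_lsum K f : sumZ K f = lsum (zrange K) f. Proof. reflexivity. Qed.

Lemma lsum_ext {A} (l : list A) f g : (forall x, f x = g x) -> lsum l f = lsum l g.
Proof. intros H; induction l; simpl; auto. Qed.

Lemma lsum_app {A} (l1 l2 : list A) f : lsum (l1 ++ l2) f = (lsum l1 f + lsum l2 f)%nat.
Proof. induction l1; simpl; auto. rewrite IHl1. lia. Qed.

Lemma lsum_map {A B} (g : A -> B) l f : lsum (map g l) f = lsum l (fun x => f (g x)).
Proof. induction l; simpl; congruence. Qed.

Lemma lsum_perm {A} (l l' : list A) f : Permutation l l' -> lsum l f = lsum l' f.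
Proof. induction 1; simpl; lia. Qed.

Lemma lsum_plus {A} (l : list A) f g : lsum l (fun x => (f x + g x)%nat) = (lsum l f + lsum l g)%nat.
Proof. induction l; simpl; auto. rewrite IHl. lia. Qed.

Lemma lsum_prod {A B} (l1 : list A) (l2 : list B) (F : A -> B -> nat) :
  lsum l1 (fun x => lsum l2 (fun y => F x y)) = lsum (list_prod l1 l2) (fun p => F (fst p) (snd p)).
Proof. induction l1; simpl; auto. rewrite lsum_app, lsum_map. simpl. congruence. Qed.

Lemma lsum_filter {A} (l : list A) (p : A -> bool) : lsum l (fun x => if p x then 1%nat else 0%nat) = length (filter p l).
Proof. induction l; simpl; auto. destruct (p a); simpl; lia. Qed.

Lemma in_zrange K z : In z (zrange K) <-> -K <= z <= K.
Proof.
  unfold zrange. rewrite in_map_iff. split.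
  - intros [i [<- Hi]]. apply in_seq in Hi. lia.
  - intros H. exists (Z.to_nat (z + K)). split. lia. apply in_seq. lia.
Qed.

Lemma nodup_zrange K : NoDup (zrange K).
Proof. unfold zrange. apply FinFun.Injective_map_NoDup. intros i j H; lia. apply seq_NoDup. Qed.

Lemma length_zrange K : length (zrange K) = Z.to_nat (2*K+1).
Proof. unfold zrange. rewrite length_map, length_seq. reflexivity. Qed.

Lemma nodup_prod {A B} (l1 : list A) (l2 : list B) : NoDup l1 -> NoDup l2 -> NoDup (list_prod l1 l2).
Proof.
  intros H1 H2. induction H1; simpl. constructor.
  apply NoDup_app; auto.
  - apply FinFun.Injective_map_NoDup; auto. intros a b Hab; congruence.
  - intros [a b] Ha Hb. apply in_map_iff in Ha. destruct Ha as [y [Hy _]]. inversion Hy; subst.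
    apply in_prod_iff in Hb. tauto.
Qed.

Lemma sumZ_opp K f : sumZ K f = sumZ K (fun z => f (- z)).
Proof.
  rewrite !sumZ_lsum.
  transitivity (lsum (map Z.opp (zrange K)) f).
  - apply lsum_perm. apply NoDup_Permutation. apply nodup_zrange.
    apply FinFun.Injective_map_NoDup. intros a b; lia. apply nodup_zrange.
    intro x. rewrite in_map_iff, in_zrange. split.
    + intros H; exists (-x); rewrite in_zrange; split; lia.
    + intros [y [<- Hy]]; rewrite in_zrange in Hy; lia.
  - rewrite lsum_map. reflexivity.
Qed.

Lemma sumZ_sgn K s f : (s = 1 \/ s = -1) -> sumZ K f = sumZ K (fun z => f (s * z)).
Proof.
  intros [-> | ->].
  - rewrite !sumZ_lsum. apply lsum_ext; intro; f_equal; lia.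
  - rewrite sumZ_opp, !sumZ_lsum. apply lsum_ext; intro; f_equal; lia.
Qed.

Definition P7 := Z -> Z -> Z -> Z -> Z -> Z -> Z -> bool.

Lemma count7_sign K (P Q : P7) s1 s2 s3 s4 s5 s6 s7 :
  (s1 = 1 \/ s1 = -1) -> (s2 = 1 \/ s2 = -1) -> (s3 = 1 \/ s3 = -1) ->
  (s4 = 1 \/ s4 = -1) -> (s5 = 1 \/ s5 = -1) -> (s6 = 1 \/ s6 = -1) ->
  (s7 = 1 \/ s7 = -1) ->
  (forall x1 x2 x3 x4 x5 x6 x7,
     P (s1*x1) (s2*x2) (s3*x3) (s4*x4) (s5*x5) (s6*x6) (s7*x7) = Q x1 x2 x3 x4 x5 x6 x7) ->
  count7 K P = count7 K Q.
Proof.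
  intros H1 H2 H3 H4 H5 H6 H7 HPQ. unfold count7.
  rewrite (sumZ_sgn K s1 _ H1), !sumZ_lsum. apply lsum_ext; intro x1.
  rewrite (sumZ_sgn K s2 _ H2), !sumZ_lsum. apply lsum_ext; intro x2.
  rewrite (sumZ_sgn K s3 _ H3), !sumZ_lsum. apply lsum_ext; intro x3.
  rewrite (sumZ_sgn K s4 _ H4), !sumZ_lsum. apply lsum_ext; intro x4.
  rewrite (sumZ_sgn K s5 _ H5), !sumZ_lsum. apply lsum_ext; intro x5.
  rewrite (sumZ_sgn K s6 _ H6), !sumZ_lsum. apply lsum_ext; intro x6.
  rewrite (sumZ_sgn K s7 _ H7), !sumZ_lsum. apply lsum_ext; intro x7.
  rewrite HPQ. reflexivity.
Qed.

Lemma count7_ext K (P Q : P7) :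
  (forall x1 x2 x3 x4 x5 x6 x7, P x1 x2 x3 x4 x5 x6 x7 = Q x1 x2 x3 x4 x5 x6 x7) ->
  count7 K P = count7 K Q.
Proof.
  intros H. apply (count7_sign K P Q 1 1 1 1 1 1 1); auto.
  intros. rewrite !Z.mul_1_l. auto.
Qed.

Lemma count7_or K (P Q : P7) :
  (forall x1 x2 x3 x4 x5 x6 x7, P x1 x2 x3 x4 x5 x6 x7 && Q x1 x2 x3 x4 x5 x6 x7 = false) ->
  count7 K (fun x1 x2 x3 x4 x5 x6 x7 => P x1 x2 x3 x4 x5 x6 x7 || Q x1 x2 x3 x4 x5 x6 x7)
  = (count7 K P + count7 K Q)%nat.
Proof.
  intros H. unfold count7.
  do 7 (rewrite !sumZ_lsum, <- lsum_plus; apply lsum_ext; intro).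
  match goal with |- context [P ?a ?b ?c ?d ?e ?f ?g] =>
    specialize (H a b c d e f g); destruct (P a b c d e f g), (Q a b c d e f g) end;
  simpl in *; auto; discriminate.
Qed.

Definition tup7 := (Z*Z*Z*Z*Z*Z*Z)%type.
Definition tuples7 K : list tup7 :=
  list_prod (list_prod (list_prod (list_prod (list_prod (list_prod
    (zrange K) (zrange K)) (zrange K)) (zrange K)) (zrange K)) (zrange K)) (zrange K).
Definition Ptup (P : P7) (t : tup7) : bool :=
  match t with (a,b,c,d,e,f,g) => P a b c d e f g end.

Lemma count7_list K P : count7 K P = length (filter (Ptup P) (tuples7 K)).
Proof.
  unfold count7, tuples7. change sumZ with (fun K f => @lsum Z (zrange K) f). cbv beta.
  rewrite lsum_prod.
  rewrite lsum_prod.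
  rewrite lsum_prod.
  rewrite lsum_prod.
  rewrite lsum_prod.
  rewrite lsum_prod.
  rewrite <- lsum_filter. apply lsum_ext. intros [[[[[[a b] c] d] e] f] g]. reflexivity.
Qed.

Definition nz (z : Z) : bool := negb (z =? 0).

Definition PNU : P7 := fun x1 x2 x3 x4 x5 x6 x7 =>
    primitive7 x1 x2 x3 x4 x5 x6 x7 &&
    first_nonzero_pos [x1; x2; x3; x4; x5; x6; x7] &&
    on_S x1 x2 x3 x4 x5 x6 x7 &&
    negb (on_lines x1 x2 x3 x4 x5 x6 x7).

Definition PM : P7 := fun x1 x2 x3 x4 x5 x6 x7 =>
    eqs_M x1 x2 x3 x4 x5 x6 x7 &&
    primitive7 x1 x2 x3 x4 x5 x6 x7 &&
    negb (x1 =? 0) && (0 <? x2) && (0 <? x3) && (0 <? x4) &&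
    negb (x5 =? 0) && (0 <? x6).

Definition PA : P7 := fun x1 x2 x3 x4 x5 x6 x7 =>
  primitive7 x1 x2 x3 x4 x5 x6 x7 && on_S x1 x2 x3 x4 x5 x6 x7 && (0 <? x1) &&
  nz x2 && nz x3 && nz x4 && nz x5 && nz x6.

Definition PE : P7 := fun x1 x2 x3 x4 x5 x6 x7 =>
  PNU x1 x2 x3 x4 x5 x6 x7 && negb (nz x1 && nz x2 && nz x3 && nz x4 && nz x5 && nz x6).

Lemma fnp_cons_nz x l : x <> 0 -> first_nonzero_pos (x :: l) = (0 <? x).
Proof. intros H. simpl. rewrite (proj2 (Z.eqb_neq x 0) H). reflexivity. Qed.

Lemma split1 x1 x2 x3 x4 x5 x6 x7 :
  PNU x1 x2 x3 x4 x5 x6 x7 = PA x1 x2 x3 x4 x5 x6 x7 || PE x1 x2 x3 x4 x5 x6 x7.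
Proof.
  unfold PE, PA, nz; cbv beta.
  destruct (Z.eqb_spec x1 0).
  - subst. rewrite Z.ltb_irrefl. btauto.
  - unfold PNU, on_lines; cbv beta. rewrite fnp_cons_nz by auto.
    rewrite (proj2 (Z.eqb_neq x1 0) n). btauto.
Qed.

Lemma disj1 x1 x2 x3 x4 x5 x6 x7 :
  PA x1 x2 x3 x4 x5 x6 x7 && PE x1 x2 x3 x4 x5 x6 x7 = false.
Proof.
  unfold PE, PA, nz; cbv beta.
  destruct (Z.eqb_spec x1 0).
  - subst. rewrite Z.ltb_irrefl. btauto.
  - btauto.
Qed.

Lemma eqb0_congr a b : (a = b \/ a = - b) -> (a =? 0) = (b =? 0).
Proof. intros [-> | ->]; auto. destruct (Z.eqb_spec b 0), (Z.eqb_spec (-b) 0); auto; lia. Qed.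

Ltac atoms_tac :=
  repeat (match goal with |- (_ && _) = (_ && _) => f_equal end);
  apply eqb0_congr; first [left; ring | right; ring].

Lemma onS_neg x1 x2 x3 x4 x5 x6 x7 :
  on_S (-x1) (-x2) (-x3) (-x4) (-x5) (-x6) (-x7) = on_S x1 x2 x3 x4 x5 x6 x7.
Proof. unfold on_S. atoms_tac. Qed.

Lemma onS_f357 x1 x2 x3 x4 x5 x6 x7 :
  on_S x1 x2 (-x3) x4 (-x5) x6 (-x7) = on_S x1 x2 x3 x4 x5 x6 x7.
Proof. unfold on_S. atoms_tac. Qed.

Lemma eqsM_f157 x1 x2 x3 x4 x5 x6 x7 :
  eqs_M (-x1) x2 x3 x4 (-x5) x6 (-x7) = on_S x1 x2 x3 x4 x5 x6 x7.
Proof. unfold on_S, eqs_M. atoms_tac. Qed.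

Lemma prim_neg x1 x2 x3 x4 x5 x6 x7 :
  primitive7 (-x1) (-x2) (-x3) (-x4) (-x5) (-x6) (-x7) = primitive7 x1 x2 x3 x4 x5 x6 x7.
Proof. unfold primitive7. repeat rewrite ?Z.gcd_opp_l, ?Z.gcd_opp_r. reflexivity. Qed.

Lemma prim_f357 x1 x2 x3 x4 x5 x6 x7 :
  primitive7 x1 x2 (-x3) x4 (-x5) x6 (-x7) = primitive7 x1 x2 x3 x4 x5 x6 x7.
Proof. unfold primitive7. repeat rewrite ?Z.gcd_opp_l, ?Z.gcd_opp_r. reflexivity. Qed.

Lemma prim_f157 x1 x2 x3 x4 x5 x6 x7 :
  primitive7 (-x1) x2 x3 x4 (-x5) x6 (-x7) = primitive7 x1 x2 x3 x4 x5 x6 x7.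
Proof. unfold primitive7. repeat rewrite ?Z.gcd_opp_l, ?Z.gcd_opp_r. reflexivity. Qed.

Lemma ltb0_opp x : (0 <? - x) = (x <? 0).
Proof. destruct (Z.ltb_spec 0 (-x)), (Z.ltb_spec x 0); auto; lia. Qed.
Lemma ltb_opp0 x : (- x <? 0) = (0 <? x).
Proof. destruct (Z.ltb_spec (-x) 0), (Z.ltb_spec 0 x); auto; lia. Qed.
Lemma eqb_opp0 x : (- x =? 0) = (x =? 0).
Proof. destruct (Z.eqb_spec (-x) 0), (Z.eqb_spec x 0); auto; lia. Qed.

Lemma m1 x : -1 * x = - x. Proof. ring. Qed.

Definition PAp : P7 := fun x1 x2 x3 x4 x5 x6 x7 => PA x1 x2 x3 x4 x5 x6 x7 && (0 <? x2).
Definition PAm : P7 := fun x1 x2 x3 x4 x5 x6 x7 => PA x1 x2 x3 x4 x5 x6 x7 && (x2 <? 0).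
Definition PR : P7 := fun x1 x2 x3 x4 x5 x6 x7 =>
  primitive7 x1 x2 x3 x4 x5 x6 x7 && on_S x1 x2 x3 x4 x5 x6 x7 && (x1 <? 0) &&
  nz x2 && nz x3 && nz x4 && nz x5 && nz x6 && (0 <? x2).
Definition PQ : P7 := fun x1 x2 x3 x4 x5 x6 x7 =>
  primitive7 x1 x2 x3 x4 x5 x6 x7 && on_S x1 x2 x3 x4 x5 x6 x7 && nz x1 && (0 <? x2) &&
  nz x3 && nz x4 && nz x5 && nz x6.
Definition PQp : P7 := fun x1 x2 x3 x4 x5 x6 x7 => PQ x1 x2 x3 x4 x5 x6 x7 && (0 <? x3).
Definition PQm : P7 := fun x1 x2 x3 x4 x5 x6 x7 => PQ x1 x2 x3 x4 x5 x6 x7 && (x3 <? 0).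

Ltac sign_cases y :=
  destruct (Z.ltb_spec 0 y), (Z.ltb_spec y 0), (Z.eqb_spec y 0);
  first [exfalso; lia | btauto].

Lemma count_PA K : count7 K PA = count7 K PQ.
Proof.
  transitivity (count7 K (fun x1 x2 x3 x4 x5 x6 x7 => PAp x1 x2 x3 x4 x5 x6 x7 || PAm x1 x2 x3 x4 x5 x6 x7)).
  { apply count7_ext. intros. unfold PAp, PAm, PA, nz; cbv beta. sign_cases x2. }
  rewrite count7_or.
  2:{ intros. unfold PAp, PAm, PA, nz; cbv beta. sign_cases x2. }
  replace (count7 K PAm) with (count7 K PR).
  2:{ symmetry. apply (count7_sign K PAm PR (-1) (-1) (-1) (-1) (-1) (-1) (-1)); auto.
      intros. rewrite !m1. unfold PAm, PA, PR, nz; cbv beta.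
      rewrite prim_neg, onS_neg, ltb0_opp, ltb_opp0, !eqb_opp0. btauto. }
  rewrite <- count7_or.
  2:{ intros. unfold PAp, PR, PA, nz; cbv beta. sign_cases x1. }
  apply count7_ext. intros. unfold PAp, PR, PA, PQ, nz; cbv beta.
  destruct (Z.ltb_spec 0 x2), (Z.ltb_spec x2 0), (Z.eqb_spec x2 0); try (exfalso; lia); sign_cases x1.
Qed.

Lemma count_PQ K : count7 K PQ = (2 * count7 K PQp)%nat.
Proof.
  transitivity (count7 K (fun x1 x2 x3 x4 x5 x6 x7 => PQp x1 x2 x3 x4 x5 x6 x7 || PQm x1 x2 x3 x4 x5 x6 x7)).
  { apply count7_ext. intros. unfold PQp, PQm, PQ, nz; cbv beta. sign_cases x3. }
  rewrite count7_or.
  2:{ intros. unfold PQp, PQm, PQ, nz; cbv beta. sign_cases x3. }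
  replace (count7 K PQm) with (count7 K PQp). lia.
  symmetry. apply (count7_sign K PQm PQp 1 1 (-1) 1 (-1) 1 (-1)); auto.
  intros. rewrite !m1, !Z.mul_1_l. unfold PQm, PQp, PQ, nz; cbv beta.
  rewrite prim_f357, onS_f357, ltb_opp0, !eqb_opp0. btauto.
Qed.

Lemma onS_facts x1 x2 x3 x4 x5 x6 x7 : on_S x1 x2 x3 x4 x5 x6 x7 = true ->
  x1^2 - x2*x4 = 0 /\ x1*x5 - x3*x4 = 0 /\ x1*x3 - x2*x5 = 0 /\
  x1*x6 - x3*x5 = 0 /\ x2*x6 - x3^2 = 0 /\ x4*x6 - x5^2 = 0 /\
  x1^2 + x1*x4 + x5*x7 = 0 /\ x1*x2 + x1^2 + x3*x7 = 0 /\
  x1*x3 + x1*x5 + x6*x7 = 0.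
Proof. unfold on_S. intros H. repeat rewrite andb_true_iff in H. rewrite !Z.eqb_eq in H. tauto. Qed.

Lemma count_PM K : count7 K PM = count7 K PQp.
Proof.
  apply (count7_sign K PM PQp (-1) 1 1 1 (-1) 1 (-1)); auto.
  intros. rewrite !m1, !Z.mul_1_l. unfold PM, PQp, PQ, nz; cbv beta.
  rewrite eqsM_f157, prim_f157, !eqb_opp0.
  destruct (on_S x1 x2 x3 x4 x5 x6 x7) eqn:HS; [|btauto].
  apply onS_facts in HS.
  destruct (Z.ltb_spec 0 x2); [|btauto].
  destruct (Z.ltb_spec 0 x4), (Z.eqb_spec x4 0); try (exfalso; nia);
  destruct (Z.ltb_spec 0 x6), (Z.eqb_spec x6 0); try (exfalso; nia);
  destruct (Z.ltb_spec 0 x3), (Z.eqb_spec x3 0); try (exfalso; nia); btauto.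
Qed.

Lemma main_eq K : count7 K PNU = (2 * count7 K PM + count7 K PE)%nat.
Proof.
  rewrite count_PM, <- count_PQ, <- count_PA, <- count7_or by apply disj1.
  apply count7_ext. apply split1.
Qed.

Lemma triple a b c : a * c = b^2 -> Z.gcd a (Z.gcd b c) = 1 ->
  exists e u v, (e = 1 \/ e = -1) /\ a = e*u*u /\ b = e*u*v /\ c = e*v*v.
Proof.
  intros Heq Hg.
  destruct (Z.eq_dec a 0) as [Ha|Ha].
  - subst. assert (b = 0) by nia. subst.
    rewrite Z.gcd_0_l in Hg. rewrite (Z.gcd_0_l c) in Hg.
    exists c, 0, 1. split; [lia|]. repeat split; lia.
  - set (g := Z.gcd a b).
    assert (Hg0 : g <> 0) by (unfold g; rewrite Z.gcd_eq_0; tauto).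
    destruct (Z.gcd_divide_l a b) as [a' Ha'].
    destruct (Z.gcd_divide_r a b) as [b' Hb'].
    fold g in Ha', Hb'.
    assert (Hab : Z.gcd a' b' = 1).
    { pose proof (Z.gcd_div_gcd a b g Hg0 eq_refl) as H.
      replace (a / g) with a' in H by (rewrite Ha' at 1; rewrite Z.div_mul; auto).
      replace (b / g) with b' in H by (rewrite Hb' at 1; rewrite Z.div_mul; auto).
      exact H. }
    assert (Ha'0 : a' <> 0) by (intro H0; rewrite H0 in Ha'; lia).
    assert (H1 : a' * c = g * (b' * b')).
    { apply (Z.mul_reg_l _ _ g); auto. rewrite Ha', Hb' in Heq. nia. }
    assert (Hdiv : (a' | g)).
    { apply (Z.gauss _ b'); auto. apply (Z.gauss _ b'); auto.
      exists c. rewrite Z.mul_comm. nia. }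
    destruct Hdiv as [k Hk].
    assert (Hc : c = k * (b' * b')).
    { apply (Z.mul_reg_l _ _ a'); auto. nia. }
    assert (Hk1 : (k | 1)).
    { rewrite <- Hg. apply Z.gcd_greatest.
      - exists (a' * a'). nia.
      - apply Z.gcd_greatest. exists (b' * a'). nia. exists (b'*b'). nia. }
    apply Z.divide_1_r in Hk1.
    exists k, a', b'. split; auto. nia.
Qed.

Lemma some_zero x1 x2 x3 x4 x5 x6 :
  (nz x1 && nz x2 && nz x3 && nz x4 && nz x5 && nz x6) = false ->
  x1 = 0 \/ x2 = 0 \/ x3 = 0 \/ x4 = 0 \/ x5 = 0 \/ x6 = 0.
Proof.
  unfold nz.
  destruct (Z.eqb_spec x1 0); [tauto|]. destruct (Z.eqb_spec x2 0); [tauto|].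
  destruct (Z.eqb_spec x3 0); [tauto|]. destruct (Z.eqb_spec x4 0); [tauto|].
  destruct (Z.eqb_spec x5 0); [tauto|]. destruct (Z.eqb_spec x6 0); [tauto|].
  discriminate.
Qed.

Lemma lines_true x1 x2 x3 x4 x5 x6 x7 :
  (x1 = 0 /\ x2 = 0 /\ x3 = 0 /\ x5 = 0 /\ x6 = 0) \/
  (x1 = 0 /\ x3 = 0 /\ x4 = 0 /\ x5 = 0 /\ x6 = 0) \/
  (x3 = 0 /\ x5 = 0 /\ x6 = 0 /\ x1 + x4 = 0 /\ x1 + x2 = 0) ->
  on_lines x1 x2 x3 x4 x5 x6 x7 = true.
Proof.
  intros H. unfold on_lines. rewrite !orb_true_iff, !andb_true_iff, !Z.eqb_eq. tauto.
Qed.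

Lemma abs_gcd a b : Z.abs (Z.gcd a b) = Z.gcd a b.
Proof. apply Z.abs_eq, Z.gcd_nonneg. Qed.

Lemma PE_struct x1 x2 x3 x4 x5 x6 x7 : PE x1 x2 x3 x4 x5 x6 x7 = true ->
  x1 = 0 /\ x7 = 0 /\
  ((x2 = 0 /\ x3 = 0 /\ x4 * x6 = x5^2 /\ Z.gcd x4 (Z.gcd x5 x6) = 1) \/
   (x4 = 0 /\ x5 = 0 /\ x2 * x6 = x3^2 /\ Z.gcd x2 (Z.gcd x3 x6) = 1)).
Proof.
  unfold PE, PNU. intros H.
  repeat match goal with H : (_ && _) = true |- _ => apply andb_prop in H; destruct H end.
  match goal with H : negb (on_lines _ _ _ _ _ _ _) = true |- _ => apply negb_true_iff in H; rename H into Hl end.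
  match goal with H : negb (_ && nz _) = true |- _ => apply negb_true_iff, some_zero in H; rename H into Hz end.
  match goal with H : on_S _ _ _ _ _ _ _ = true |- _ => apply onS_facts in H; rename H into HS end.
  match goal with H : primitive7 _ _ _ _ _ _ _ = true |- _ => unfold primitive7 in H; apply Z.eqb_eq in H; rename H into Hp end.
  destruct HS as (E1 & E2 & E3 & E4 & E5 & E6 & E7 & E8 & E9).
  assert (Hx1 : x1 = 0).
  { destruct (Z.eq_dec x1 0) as [|n1]; auto. exfalso.
    assert (x2 <> 0) by (intro; subst; nia).
    assert (x4 <> 0) by (intro; subst; nia).
    assert (x3 = 0 /\ x5 = 0 /\ x6 = 0) as (h3 & h5 & h6).
    { destruct Hz as [h|[h|[h|[h|[h|h]]]]]; try contradiction; subst.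
      - assert (x5 = 0) by nia. subst. split; auto. split; auto. nia.
      - assert (x3 = 0) by nia. subst. split; auto. split; auto. nia.
      - assert (x3 = 0) by nia. subst. assert (x5 = 0) by nia. auto. }
    subst.
    assert (x1 + x4 = 0) by nia. assert (x1 + x2 = 0) by nia.
    rewrite lines_true in Hl; [discriminate|]. right; right; auto. }
  subst x1.
  assert (x2 * x4 = 0) by nia.
  apply Z.mul_eq_0 in H. destruct H as [h2|h4].
  - subst x2. assert (x3 = 0) by nia. subst x3.
    assert (x7 = 0).
    { destruct (Z.eq_dec x7 0); auto. exfalso.
      assert (x5 = 0) by nia. assert (x6 = 0) by nia. subst.
      rewrite lines_true in Hl; [discriminate|]. left; auto. }
    subst x7. split; auto. split; auto. left. repeat split; try lia.
    repeat rewrite ?Z.gcd_0_l, ?Z.gcd_0_r, ?Z.gcd_abs_r, ?abs_gcd, ?Z.abs_idemp in Hp. exact Hp.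
  - subst x4. assert (x5 = 0) by nia. subst x5.
    assert (x7 = 0).
    { destruct (Z.eq_dec x7 0); auto. exfalso.
      assert (x3 = 0) by nia. assert (x6 = 0) by nia. subst.
      rewrite lines_true in Hl; [discriminate|]. right; left; auto. }
    subst x7. split; auto. split; auto. right. repeat split; try lia.
    repeat rewrite ?Z.gcd_0_l, ?Z.gcd_0_r, ?Z.gcd_abs_r, ?abs_gcd, ?Z.abs_idemp in Hp. exact Hp.
Qed.

Definition Tl r : list (Z*Z*Z) := list_prod (list_prod [1;-1] (zrange r)) (zrange r).
Definition psi1 (t : Z*Z*Z) : tup7 := match t with (e,u,v) => (0,0,0,e*u*u,e*u*v,e*v*v,0) end.
Definition psi2 (t : Z*Z*Z) : tup7 := match t with (e,u,v) => (0,e*u*u,e*u*v,0,0,e*v*v,0) end.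

Lemma sqrt_bound K u e : 0 <= K -> (e = 1 \/ e = -1) -> -K <= e*u*u <= K ->
  -Z.sqrt K <= u <= Z.sqrt K.
Proof.
  intros HK He Hu. pose proof (Z.sqrt_spec K HK) as Hs. cbv zeta in Hs. unfold Z.succ in Hs.
  pose proof (Z.sqrt_nonneg K).
  assert (u*u <= K) by (destruct He; subst; nia).
  nia.
Qed.

Lemma in_Tl K e u v : 0 <= K -> (e = 1 \/ e = -1) -> -K <= e*u*u <= K -> -K <= e*v*v <= K ->
  In (e,u,v) (Tl (Z.sqrt K)).
Proof.
  intros HK He Hu Hv. unfold Tl. rewrite !in_prod_iff, !in_zrange. simpl.
  split; [split|]; [simpl; destruct He; subst; auto | eapply sqrt_bound; eauto | eapply sqrt_bound; eauto].
Qed.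

Lemma PE_bound K : 1 <= K -> Z.of_nat (count7 K PE) <= 36 * K.
Proof.
  intros HK. rewrite count7_list.
  assert (Hl : (length (filter (Ptup PE) (tuples7 K)) <=
           length (map psi1 (Tl (Z.sqrt K)) ++ map psi2 (Tl (Z.sqrt K))))%nat).
  { apply NoDup_incl_length.
    - apply NoDup_filter. unfold tuples7. repeat apply nodup_prod; apply nodup_zrange.
    - intros [[[[[[a b] c] d] e] f] g] Hin. apply filter_In in Hin as [Hin HP].
      unfold tuples7 in Hin.
      repeat match goal with H : In (_, _) (list_prod _ _) |- _ => apply in_prod_iff in H; destruct H end.
      repeat match goal with H : In _ (zrange _) |- _ => apply in_zrange in H end.
      simpl in HP. apply PE_struct in HP.
      destruct HP as (-> & -> & [(-> & -> & Heq & Hg) | (-> & -> & Heq & Hg)]).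
      + destruct (triple d e f Heq Hg) as (ep & u & v & He & -> & -> & ->).
        apply in_or_app; left. apply in_map_iff. exists (ep,u,v). split; [reflexivity|].
        apply in_Tl; try lia; tauto.
      + destruct (triple b c f Heq Hg) as (ep & u & v & He & -> & -> & ->).
        apply in_or_app; right. apply in_map_iff. exists (ep,u,v). split; [reflexivity|].
        apply in_Tl; try lia; tauto. }
  rewrite length_app, !length_map in Hl. unfold Tl in Hl.
  rewrite !length_prod, length_zrange in Hl. simpl (length [1;-1]) in Hl.
  pose proof (Z.sqrt_spec K ltac:(lia)) as Hs. cbv zeta in Hs.
  pose proof (Z.sqrt_nonneg K).
  apply Nat2Z.inj_le in Hl. rewrite !Nat2Z.inj_add, !Nat2Z.inj_mul, Z2Nat.id in Hl by lia.
  nia.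
Qed.

Theorem lemma3p1 :
  exists C : R, forall B : R, (1 <= B)%R ->
    (Rabs (INR (N_U B) - 2 * INR (M B)) <= C * B)%R.
Proof.
  exists 36%R. intros B HB.
  destruct (base_Int_part B) as [H1 H2].
  assert (HK : (1 <= floorR B)%Z).
  { unfold floorR. apply le_IZR. assert (IZR (Int_part B) > 0)%R by lra.
    apply lt_IZR in H. apply IZR_le. lia. }
  change (N_U B) with (count7 (floorR B) PNU).
  change (M B) with (count7 (floorR B) PM).
  rewrite main_eq.
  pose proof (PE_bound _ HK) as HE.
  replace (INR (2 * count7 (floorR B) PM + count7 (floorR B) PE) - 2 * INR (count7 (floorR B) PM))%R
    with (INR (count7 (floorR B) PE)) by (rewrite plus_INR, mult_INR; simpl; ring).
  rewrite Rabs_pos_eq by apply pos_INR.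
  rewrite INR_IZR_INZ. apply IZR_le in HE. rewrite mult_IZR in HE.
  set (cnt := IZR (Z.of_nat (count7 (floorR B) PE))) in *.
  unfold floorR in HE. lra.
Qed.
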